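(* For all integers $n\ge 3$ and $1<k<n$, the girth of $G=H_B(n,k)$ is $4$.
   Context: Fix integers $n\ge 2$ and $1\le k<n$ and positive real numbers $x_1<x_2<\dots<x_n$. Let $\mathscr{B}_n=\{\pm x_1,\pm x_2,\dots,\pm x_{n-1},x_n\}$ (so $-x_n\notin\mathscr{B}_n$). Let $\phi(\mathscr{B}_n)$ be the family of all nonempty subsets $S\subseteq\mathscr{B}_n$ whose elements have pairwise distinct absolute values and whose element of largest absolute value is positive. Let $\mathscr{B}_n^+=\{x_1,\dots,x_n\}$, let $V_1$ be the set of all $k$-element subsets of $\mathscr{B}_n^+$, and let $V_2=\phi(\mathscr{B}_n)\setminus V_1$. For $A\in\phi(\mathscr{B}_n)$ put $A^\dagger=\{|a|:a\in A\}$. The bipartite Kneser B type-$k$ graph $H_B(n,k)$ is the simple graph with vertex set $V_1\cup V_2$ in which $X\in V_1$ and $Y\in V_2$ are adjacent if and only if $X\subseteq Y^\dagger$ or $Y^\dagger\subseteq X$, and there are no other edges. The girth is the length of a shortest cycle. *)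

(* Defs.v *)
From mathcomp Require Import all_boot.
Set Implicit Arguments. Unset Strict Implicit. Unset Printing Implicit Defensive.

(* Encoding: since 0 < x_1 < ... < x_n, the signed element +x_(i+1) is encoded
   as (true, i) and -x_(i+1) as (false, i), with i : 'I_n.  The absolute value
   |±x_(i+1)| = x_(i+1) corresponds to the index i, and comparing absolute
   values corresponds to comparing indices. *)
Definition signed n := (bool * 'I_n)%type.

(* membership in B_n : every element except -x_n *)
Definition in_Bn n (p : signed n) : bool := p.1 || (val p.2 != n.-1).

Definition dagger n (A : {set signed n}) : {set 'I_n} := [set p.2 | p in A].

Definition phiB n (S : {set signed n}) : bool :=
  [&& S != set0,
      [forall p in S, in_Bn p],
      [forall p in S, forall q in S, (p.2 == q.2) ==> (p == q)] &
      [forall p in S, [forall q in S, val q.2 <= val p.2] ==> p.1]].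

Definition V1 n k (S : {set signed n}) : bool :=
  [forall p in S, p.1] && (#|S| == k).

(* vertex set V1 ∪ V2 = phi(B_n) (V1 ⊆ phi(B_n) when k ≥ 1) ; V2 = phi \ V1 *)
Definition vertexHB n k (S : {set signed n}) : bool := phiB S || V1 k S.
Definition V2 n k (S : {set signed n}) : bool := phiB S && ~~ V1 k S.

Definition adjHB_dir n k (X Y : {set signed n}) : bool :=
  [&& V1 k X, V2 k Y & (dagger X \subset dagger Y) || (dagger Y \subset dagger X)].

Definition adjHB n k : rel {set signed n} :=
  fun X Y => adjHB_dir k X Y || adjHB_dir k Y X.

Definition has_cycle_len (T : finType) (V : pred T) (e : rel T) (m : nat) : Prop :=
  exists s : seq T, [/\ size s = m, 3 <= m, uniq s, all V s & cycle e s].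

Definition girth_eq (T : finType) (V : pred T) (e : rel T) (g : nat) : Prop :=
  has_cycle_len V e g /\ forall m, has_cycle_len V e m -> g <= m.

(* Main.v *)
Require Import Defs.
From mathcomp Require Import all_boot.

Lemma adj_xor n k (X Y : {set signed n}) : adjHB k X Y -> V1 k X != V1 k Y.
Proof.
rewrite /adjHB /adjHB_dir /V2.
by case/orP=> /and3P [h1 /andP [_ h2] _]; move: h1 h2;
  case: (V1 k X); case: (V1 k Y).
Qed.

Section Constr.
Variables n k : nat.
Hypothesis n3 : 3 <= n.
Hypothesis k1 : 1 < k.
Hypothesis kn : k < n.

Lemma kln : k <= n. Proof. exact: ltnW. Qed.

Definition gX2 (i : 'I_k) : 'I_n := Ordinal (leq_ltn_trans (ltn_ord i) kn).

Definition X1 : {set signed n} := [set (true, widen_ord kln i) | i : 'I_k].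
Definition X2 : {set signed n} := [set (true, gX2 i) | i : 'I_k].
Definition Y1 : {set signed n} := [set (val i != 0, i) | i : 'I_n].
Definition Y2 : {set signed n} := [set (val i != 1, i) | i : 'I_n].

Lemma V1X1 : V1 k X1.
Proof.
apply/andP; split.
  by apply/forall_inP=> p /imsetP [i _ ->].
rewrite card_imset ?card_ord // => i j [] H; apply: val_inj; exact: H.
Qed.

Lemma V1X2 : V1 k X2.
Proof.
apply/andP; split.
  by apply/forall_inP=> p /imsetP [i _ ->].
rewrite card_imset ?card_ord // => i j [] H; apply: val_inj; exact: H.
Qed.

Lemma n0 : 0 < n. Proof. by apply: leq_trans n3. Qed.

Definition o0 : 'I_n := Ordinal n0.


Lemma phiY (c : nat) (Hc : c < n.-1) :
  phiB [set (val i != c, i) | i : 'I_n] && ~~ V1 k [set (val i != c, i) | i : 'I_n].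
Proof.
have cn : c < n by apply: (leq_trans Hc); rewrite leq_pred.
have mx : n.-1 < n by rewrite prednK // n0.
apply/andP; split; last first.
  apply/negP=> /andP [/forall_inP H _].
  have Hin : (false, Ordinal cn) \in [set (val i != c, i) | i : 'I_n].
    by apply/imsetP; exists (Ordinal cn) => //=; rewrite eqxx.
  by have := H _ Hin.
apply/and4P; split.
- apply/set0Pn; exists (true, Ordinal mx); apply/imsetP; exists (Ordinal mx) => //=.
  by rewrite neq_ltn Hc ?orbT.
- apply/forall_inP=> p /imsetP [i _ ->]; rewrite /in_Bn /=.
  by case: eqP => //= ->; rewrite neq_ltn Hc ?orbT.
- apply/forall_inP=> p /imsetP [i _ ->]; apply/forall_inP=> q /imsetP [j _ ->] /=.
  by apply/implyP=> /eqP ->.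
- apply/forall_inP=> p /imsetP [i _ ->] /=; apply/implyP=> /forall_inP H.
  have := H (val (Ordinal mx) != c, Ordinal mx).
  rewrite /= => H'.
  have Hi : n.-1 <= i by apply: H'; apply/imsetP; exists (Ordinal mx).
  apply/eqP=> Ei; move: Hi; rewrite Ei leqNgt; by rewrite Hc.
Qed.

Lemma daggerY c : dagger [set (val i != c, i) | i : 'I_n] = [set: 'I_n].
Proof.
apply/setP=> i; rewrite in_setT; apply/imsetP; exists (val i != c, i) => //.
by apply/imsetP; exists i.
Qed.

End Constr.

Theorem mainTheorem8 (n k : nat) :
  3 <= n -> 1 < k < n ->
  girth_eq (@vertexHB n k) (@adjHB n k) 4.
Proof.
move=> n3 /andP [k1 kn]; split; last first.
  move=> m [s [Hs m3 _ _ Hc]].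
  rewrite ltn_neqAle m3 andbT; apply/eqP=> E; rewrite -E in Hs.
  case: s Hs Hc => [|a [|b [|c [|? ?]]]] //= _.
  rewrite andbT => /and3P [/adj_xor Hab /adj_xor Hbc /adj_xor Hca].
  by move: Hab Hbc Hca; case: (V1 k a); case: (V1 k b); case: (V1 k c).
have H0 : 0 < n.-1 by rewrite -ltnS prednK; [apply: leq_trans n3| apply: leq_trans n3].
have H1 : 1 < n.-1 by rewrite -ltnS prednK; [apply: leq_trans n3| apply: leq_trans n3].
have P0 := @phiY n k n3 0 H0; have P1 := @phiY n k n3 1 H1.
have X1v := @V1X1 n k kn; have X2v := @V1X2 n k kn.
set A := X1 n k kn; set B := X2 n k kn.
set C := [set (val i != 0, i) | i : 'I_n]; set D := [set (val i != 1, i) | i : 'I_n].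
have adjXY : forall X Y : {set signed n}, V1 k X -> phiB Y && ~~ V1 k Y -> dagger Y = setT -> adjHB k X Y /\ adjHB k Y X.
  move=> X Y HX HY DY.
  have h : adjHB_dir k X Y by rewrite /adjHB_dir HX /V2 HY DY subsetT.
  by rewrite /adjHB h orbT.
have [aAC aCA] := adjXY A C X1v P0 (daggerY _ _).
have [aAD aDA] := adjXY A D X1v P1 (daggerY _ _).
have [aBC aCB] := adjXY B C X2v P0 (daggerY _ _).
have [aBD aDB] := adjXY B D X2v P1 (daggerY _ _).
exists [:: A; C; B; D]; split => //.
- have nV : forall X Y : {set signed n}, V1 k X -> ~~ V1 k Y -> X != Y.
    by move=> X Y HX HY; apply/eqP=> E; move: HY; rewrite -E HX.
  move/andP: P0 => [_ nC]; move/andP: P1 => [_ nD].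
  have AB : A != B.
    apply/eqP=> E.
    have n0' : 0 < n by apply: leq_trans n3.
    have k0 : 0 < k by apply: ltnW.
    have : (true, Ordinal n0') \in A.
      apply/imsetP; exists (Ordinal k0) => //; congr pair; exact: val_inj.
    by rewrite E => /imsetP [i _ [] H].
  have CD : C != D.
    apply/eqP=> E.
    have n0' : 0 < n by apply: leq_trans n3.
    have : (false, Ordinal n0') \in C by apply/imsetP; exists (Ordinal n0').
    rewrite E => /imsetP [i _ [] Ei Eo]; subst i; by move: Ei.
  rewrite /= !inE !negb_or AB CD (nV _ _ X1v nC) (nV _ _ X1v nD) (nV _ _ X2v nD).
  by rewrite eq_sym (nV _ _ X2v nC).
- move/andP: P0 => [P0 _]; move/andP: P1 => [P1 _].
  by rewrite /= /vertexHB P0 P1 X1v X2v !orbT.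
- by rewrite /= aAC aCB aBD aDA.
Qed.
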